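(* Let $X,Y\subseteq\Sigma^*$ be regular languages. Then $\overrightarrow{\mathrm{AH}}_{\mathrm{ned}}(X,Y)\le\overrightarrow{\mathrm{AC}}(X,Y)$.
   Context: An edit path from $x$ to $y$ is a sequence $p=(a_1,b_1)\cdots(a_n,b_n)$ with $(a_i,b_i)\in(\Sigma\cup\{\varepsilon\})^2\setminus\{(\varepsilon,\varepsilon)\}$, $a_1\cdots a_n=x$, $b_1\cdots b_n=y$; $|p|=n$ and $\mathrm{wgt}(p)=|\{i:a_i\ne b_i\}|$. $\mathrm{ed}(x,y)=\min_p\mathrm{wgt}(p)$; $\mathrm{ned}(x,y)=\min_p\mathrm{wgt}(p)/|p|$ ($\mathrm{ned}(\varepsilon,\varepsilon)=0$). $\overrightarrow{\mathrm{AH}}_{\mathrm{ned}}(X,Y)=\lim_{k\to\infty}\sup_{x\in X,|x|\ge k}\inf_{y\in Y}\mathrm{ned}(x,y)$ and $\overrightarrow{\mathrm{AC}}(X,Y)=\lim_{n\to\infty}\sup_{x\in X,|x|\ge n}\inf_{y\in Y}\frac{\mathrm{ed}(x,y)}{|x|}$. *)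

(* Defs.v *)
From HB Require Import structures.
From mathcomp Require Import all_boot all_order all_algebra.
From mathcomp Require Import all_classical all_reals all_analysis.
Set Implicit Arguments. Unset Strict Implicit. Unset Printing Implicit Defensive.
Import Order.TTheory GRing.Theory Num.Theory.
Local Open Scope classical_set_scope.
Local Open Scope ring_scope.

Section EditDistance.
Variable Sigma : finType.

(* an edit operation (a,b) with a,b in Sigma ∪ {ε}; ε is None *)
Definition edit_op := (option Sigma * option Sigma)%type.

Definition is_edit_path (x y : seq Sigma) (p : seq edit_op) : bool :=
  [&& all (fun ab : edit_op => (ab.1 != None) || (ab.2 != None)) p,
      pmap id (unzip1 p) == x & pmap id (unzip2 p) == y].

Definition wgt (p : seq edit_op) : nat := count (fun ab : edit_op => ab.1 != ab.2) p.

Variable R : realType.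

Definition ed (x y : seq Sigma) : \bar R :=
  ereal_inf [set ((wgt p)%:R)%:E | p in [set p | is_edit_path x y p]].

Definition ned (x y : seq Sigma) : \bar R :=
  if (x == [::]) && (y == [::]) then 0%E
  else ereal_inf [set ((wgt p)%:R / (size p)%:R)%:E | p in [set p | is_edit_path x y p]].

Definition AH_ned (X Y : set (seq Sigma)) : \bar R :=
  limn (fun k : nat =>
    ereal_sup [set ereal_inf [set ned x y | y in Y]
              | x in [set x | X x /\ (k <= size x)%N]]).

Definition AsymCost (X Y : set (seq Sigma)) : \bar R :=
  limn (fun n : nat =>
    ereal_sup [set ereal_inf [set (ed x y * ((size x)%:R^-1)%:E)%E | y in Y]
              | x in [set x | X x /\ (n <= size x)%N]]).

End EditDistance.

Definition regular (Sigma : finType) (L : set (seq Sigma)) : Prop :=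
  exists (Q : finType) (q0 : Q) (delta : Q -> Sigma -> Q) (F : pred Q),
    forall w, L w <-> F (foldl delta q0 w).

(* Main.v *)
Require Import Defs.
From HB Require Import structures.
From mathcomp Require Import all_boot all_order all_algebra.
From mathcomp Require Import all_classical all_reals all_analysis.
Import Order.TTheory GRing.Theory Num.Theory.
Local Open Scope classical_set_scope.
Local Open Scope ring_scope.

Lemma ned_le_ed (R : realType) (Sigma : finType) (x y : seq Sigma) :
  x != [::] -> (ned R x y <= ed R x y * ((size x)%:R^-1)%:E)%E.
Proof.
move=> x0.
have sx : (0 < size x)%N by case: x x0.
have key : (ned R x y * ((size x)%:R)%:E <= ed R x y)%E.
  apply: le_ereal_inf_tmp => _ [p Hp <-].
  have hp : (size x <= size p)%N.
    move: Hp; rewrite /is_edit_path => /and3P[_ /eqP <- _].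
    by rewrite size_pmap (leq_trans (count_size _ _)) // size_map.
  have pp : (0 < size p)%N by apply: leq_trans sx hp.
  have h1 : (ned R x y <= ((wgt p)%:R / (size p)%:R)%:E)%E.
    rewrite /ned (negbTE x0) /=.
    by apply: ereal_inf_lbound; exists p.
  apply: le_trans (lee_wpmul2r _ h1) _; first by rewrite lee_fin.
  rewrite -EFinM lee_fin.
  apply: le_trans (_ : (wgt p)%:R / (size p)%:R * (size p)%:R <= _).
    apply: ler_wpM2l; last by rewrite ler_nat.
    by apply: divr_ge0.
  by rewrite divfK // pnatr_eq0 -lt0n.
have -> : ned R x y = (ned R x y * ((size x)%:R)%:E * ((size x)%:R^-1)%:E)%E.
  by rewrite -muleA -EFinM mulfV ?mule1 // pnatr_eq0 -lt0n.
by apply: lee_wpmul2r => //; rewrite lee_fin invr_ge0.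
Qed.

Theorem mainTheorem15 (R : realType) (Sigma : finType) (X Y : set (seq Sigma)) :
  regular X -> regular Y -> (AH_ned R X Y <= AsymCost R X Y)%E.
Proof.
move=> _ _; rewrite /AH_ned /AsymCost.
apply: lee_lim.
- apply: ereal_nonincreasing_is_cvgn => m n mn.
  apply: ereal_sup_le => _ [x [Xx nx] <-]; exists x => //; split => //.
  exact: leq_trans mn nx.
- apply: ereal_nonincreasing_is_cvgn => m n mn.
  apply: ereal_sup_le => _ [x [Xx nx] <-]; exists x => //; split => //.
  exact: leq_trans mn nx.
exists 1%N => // n /= hn.
apply: ge_ereal_sup => _ [x [Xx nx] <-].
apply: le_ereal_sup_tmp.
eexists; first by exists x.
apply: le_ereal_inf_tmp => _ [y Yy <-].
have x0 : x != [::] by case: x Xx nx => //= _; rewrite leqNgt (leq_trans _ hn).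
apply: (le_trans _ (@ned_le_ed R Sigma x y x0)).
by apply: ereal_inf_lbound; exists y.
Qed.
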